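(* Assume that Hypotheses \textbf{H1} and \textbf{H2} hold. The steady states $\mathcal{E}_{00}^{02}$, $\mathcal{E}_{00}^{12}$, $\mathcal{E}_{10}^{12}$, $\mathcal{E}_{02}^{01}$, $\mathcal{E}_{02}^{11}$ and $\mathcal{E}_{12}^{11}$ of the system are unstable when they exist.
   Context: Consider the system of two interconnected chemostats in series \[ \begin{aligned} \dot{S}_1^1 &= D_1(S_1^{\text{in}}- S_1^1)-k_1\mu_1(S_1^1) X_1^1, & \dot{X}_1^1 &=(\mu_1(S_1^1) - \alpha D_1)X_1^1,\\ \dot{S}_2^1 &= D_1(S_2^{\text{in}}- S_2^1)+k_2\mu_1(S_1^1)X_1^1-k_3\mu_2(S_2^1) X_2^1, & \dot{X}_2^1 &=(\mu_2(S_2^1) - \alpha D_1)X_2^1,\\ \dot{S}_1^2 &= D_2(S_1^1- S_1^2)-k_1\mu_1(S_1^2) X_1^2, & \dot{X}_1^2 &= \alpha D_2(X_1^1- X_1^2)+\mu_1(S_1^2)X_1^2,\\ \dot{S}_2^2 &= D_2(S_2^1- S_2^2)+k_2\mu_1(S_1^2)X_1^2-k_3\mu_2(S_2^2) X_2^2, & \dot{X}_2^2 &= \alpha D_2(X_2^1- X_2^2)+\mu_2(S_2^2)X_2^2, \end{aligned} \] where $D_i=D/r_i$ with $r_1=r\in(0,1)$, $r_2=1-r$, $\alpha\in(0,1)$, and $k_1,k_2,k_3>0$. The growth functions are $\mathcal{C}^1(\mathbb{R}_+)$ and satisfy: \textbf{H1}: $\mu_1(0)=0$, $\mu_1(+\infty)=m_1$,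 $\mu_1'(S_1)>0$ for all $S_1>0$; \textbf{H2}: $\mu_2(0)=0$, $\mu_2(+\infty)=0$, and there exists $S_2^{\text{m}}>0$ with $\mu_2'>0$ on $(0,S_2^{\text{m}})$ and $\mu_2'<0$ on $(S_2^{\text{m}},\infty)$. Let $\lambda_1^i$ be the solution of $\mu_1(S_1)=\alpha D_i$ and $\lambda_2^{i1}<\lambda_2^{i2}$ the two solutions of $\mu_2(S_2)=\alpha D_i$, $i=1,2$. A steady state $\mathcal{E}_{ij}^{kl}$ is labeled as follows: the lower indices refer to reactor 1 and the upper to reactor 2; the first index is $1$ if the first biomass ($X_1^1$, resp. $X_1^2$) is positive and $0$ if it is zero; the second index is $0$ if the second biomass ($X_2^1$, resp. $X_2^2$) is zero and otherwise indicates the type of positive second biomass. Concretely: $\mathcal{E}_{00}^{02}$ has reactor 1 at washout $(S_1^{\text{in}},0,S_2^{\text{in}},0)$ and reactor 2 equal to $(S_1^{\text{in}},0,\lambda_2^{22},(S_2^{\text{in}}-\lambda_2^{22})/(\alpha k_3))$; $\mathcal{E}_{00}^{12}$ has reactor 1 at washout and reactor 2 equal to $(\lambda_1^2,(S_1^{\text{in}}-\lambda_1^2)/(\alpha k_1),\lambda_2^{22},X_2^2)$ with $X_2^2>0$; $\mathcal{E}_{10}^{12}$ has reactor 1 equal to $(\lambda_1^1,(S_1^{\text{in}}-\lambda_1^1)/(\alpha k_1),S_2^{\text{in}}+\tfrac{k_2}{k_1}(S_1^{\text{in}}-\lambda_1^1),0)$ and reactor 2 with $X_1^2>0$, $S_2^2=\lambda_2^{22}$,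 $X_2^2>0$; $\mathcal{E}_{02}^{01}$ and $\mathcal{E}_{02}^{11}$ have reactor 1 equal to $(S_1^{\text{in}},0,\lambda_2^{12},(S_2^{\text{in}}-\lambda_2^{12})/(\alpha k_3))$ and, in reactor 2, $X_1^2=0,X_2^2>0$ resp. $X_1^2>0,X_2^2>0$; $\mathcal{E}_{12}^{11}$ has reactor 1 equal to $(\lambda_1^1,(S_1^{\text{in}}-\lambda_1^1)/(\alpha k_1),\lambda_2^{12},X_2^1)$ with $X_2^1>0$, and in reactor 2 $X_1^2>0$, $X_2^2>0$. *)

(* Defs.v *)
From HB Require Import structures.
From mathcomp Require Import all_boot all_order all_algebra.
From mathcomp Require Import all_classical all_reals all_analysis.
From mathcomp Require Import complex.
Set Implicit Arguments. Unset Strict Implicit. Unset Printing Implicit Defensive.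
Import Order.TTheory GRing.Theory Num.Theory.
Local Open Scope ring_scope.

Section Chemostat.
Variable R : realType.

(* State vector ordering (indices 0..7):
   0: S_1^1, 1: X_1^1, 2: S_2^1, 3: X_2^1,   (reactor 1)
   4: S_1^2, 5: X_1^2, 6: S_2^2, 7: X_2^2.   (reactor 2) *)
Definition stc (x : 'rV[R]_8) (k : nat) : R := x ord0 (inord k).

Definition chemo_field (mu1 mu2 : R -> R) (D r alpha k1 k2 k3 S1in S2in : R)
  (x : 'rV[R]_8) : 'rV[R]_8 :=
  let D1 := D / r in let D2 := D / (1 - r) in
  let S11 := stc x 0 in let X11 := stc x 1 in
  let S21 := stc x 2 in let X21 := stc x 3 in
  let S12 := stc x 4 in let X12 := stc x 5 in
  let S22 := stc x 6 in let X22 := stc x 7 in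
  \row_(i < 8)
    match val i with
    | 0 => D1 * (S1in - S11) - k1 * mu1 S11 * X11
    | 1 => (mu1 S11 - alpha * D1) * X11
    | 2 => D1 * (S2in - S21) + k2 * mu1 S11 * X11 - k3 * mu2 S21 * X21
    | 3 => (mu2 S21 - alpha * D1) * X21
    | 4 => D2 * (S11 - S12) - k1 * mu1 S12 * X12
    | 5 => alpha * D2 * (X11 - X12) + mu1 S12 * X12
    | 6 => D2 * (S21 - S22) + k2 * mu1 S12 * X12 - k3 * mu2 S22 * X22
    | _ => alpha * D2 * (X21 - X22) + mu2 S22 * X22
    end.

Definition jacobian (F : 'rV[R]_8 -> 'rV[R]_8) (x : 'rV[R]_8) : 'M[R]_8 :=
  \matrix_(i < 8, j < 8)
    derive1 (fun t : R => F (x + t *: delta_mx ord0 j) ord0 i) 0.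

Definition unstable (F : 'rV[R]_8 -> 'rV[R]_8) (x : 'rV[R]_8) : Prop :=
  exists z : R[i],
    eigenvalue (map_mx (fun a : R => (a%:C)%C) (jacobian F x)) z /\ 0 < complex.Re z.

Definition steady (F : 'rV[R]_8 -> 'rV[R]_8) (x : 'rV[R]_8) : Prop :=
  F x = 0 /\ forall i : 'I_8, 0 <= x ord0 i.

Definition is_lam1 (mu1 : R -> R) (a s : R) : Prop := 0 < s /\ mu1 s = a.
(* lambda_2^{i2}: the larger of the two solutions of mu2(S) = a. *)
Definition is_lam2_2 (mu2 : R -> R) (a s : R) : Prop :=
  0 < s /\ mu2 s = a /\ exists s', 0 < s' < s /\ mu2 s' = a.

End Chemostat.
Arguments stc {R} x k%_N.

(* Main.v *)
Require Import Defs.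
From HB Require Import structures.
From mathcomp Require Import all_boot all_order all_algebra.
From mathcomp Require Import all_classical all_reals all_analysis.
From mathcomp Require Import complex.
From mathcomp Require Import ring lra.
Import Order.TTheory GRing.Theory Num.Theory numFieldNormedType.Exports.
Local Open Scope ring_scope.
Local Open Scope classical_set_scope.
Section S.
Variable R : realType.

Lemma dmul_shift (mu : R -> R) s c : derivable mu s 1 ->
  is_derive (0:R) (1:R) (fun t => c * mu (t + s)) (c * derive1 mu s).
Proof.
move=> dm.
have h1 : derivable (mu \o shift s) 0 1.
  apply/derivable1_diffP; apply: differentiable_comp.
    exact/derivable1_diffP.
  by rewrite /= add0r; apply/derivable1_diffP.
have h2 : derivable (cst c * (mu \o shift s)) 0 1.
  apply: derivableM =>//.
apply: DeriveDef; first exact: h2.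
have := deriveMl c h1.
rewrite /=. move=> ->. congr (_ * _).
rewrite -derive1E derive1_comp /=.
- rewrite add0r derive1E derive1E.
  by rewrite (@derive_val _ _ _ _ _ _ _ (is_derive_shift 0 1 s)) mulr1.
- exact: (@ex_derive _ _ _ _ _ _ _ (is_derive_shift 0 1 s)).
- by rewrite add0r.
Qed.

Lemma dlin (b : R) : is_derive (0:R) (1:R) (fun t => b * t) b.
Proof.
apply: DeriveDef.
  by apply: derivableM => //; exact: derivable_id.
have := @deriveMl _ _ id b (0:R) (1:R) (@derivable_id _ _ _ _).
by rewrite derive_id mulr1.
Qed.

Lemma DC (g : R -> R) : (forall t, g t = g 0) -> derive1 g 0 = 0.
Proof.
move=> H; have -> : g = cst (g 0) by apply/funext => t; exact: H.
exact: derive1_cst.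
Qed.

Lemma DB (mu g : R -> R) s (b c : R) : derivable mu s 1 ->
  (forall t, g t = g 0 + b * t + c * (mu (t + s) - mu s)) -> derive1 g 0 = b + c * derive1 mu s.
Proof.
move=> dm H.
have -> : g = cst (g 0 - c * mu s) + ((fun t => b * t) + (fun t => c * mu (t + s))).
  apply/funext => t; rewrite H !fctE /=; ring.
rewrite derive1E.
have I : is_derive (0:R) (1:R) (cst (g 0 - c * mu s) + ((fun t => b * t) + (fun t => c * mu (t + s)))) (0 + (b + c * derive1 mu s)).
  apply: is_deriveD; apply: is_deriveD; [exact: dlin| exact: dmul_shift].
by rewrite derive_val add0r.
Qed.

Lemma DA (g : R -> R) (b : R) : 
  (forall t, g t = g 0 + b * t) -> derive1 g 0 = b.
Proof.
move=> H; have -> : g = cst (g 0) + (fun t => b * t).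
  apply/funext => t; rewrite H !fctE /=; ring.
rewrite derive1E.
have I : is_derive (0:R) (1:R) (cst (g 0) + (fun t => b * t)) (0 + b).
  apply: is_deriveD; exact: dlin.
by rewrite derive_val add0r.
Qed.

Lemma stc_shift (x : 'rV[R]_8) (t : R) (j : 'I_8) (k : nat) : (k < 8)%N ->
  stc (x + t *: delta_mx ord0 j) k = if k == val j then t + stc x k else stc x k.
Proof.
move=> hk; rewrite /stc !mxE eqxx /=.
have -> : (inord k == j) = (k == val j).
  apply/eqP/eqP => [<-|->]; [exact: (esym (inordK hk)) | exact: inord_val].
change (k == \val j) with (k == nat_of_ord j).
by case: (k == nat_of_ord j); rewrite ?mulr1n ?mulr0n ?mulr1 ?mulr0 ?addr0 // addrC.
Qed.

Variables (mu1 mu2 : R -> R) (D r alpha k1 k2 k3 S1in S2in : R).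
Local Notation F := (chemo_field mu1 mu2 D r alpha k1 k2 k3 S1in S2in).
Local Notation o k := (@Ordinal 8 k isT).

Ltac gfun := move=> t; rewrite /chemo_field !mxE /= !stc_shift //= ?add0r; ring.

Lemma row0 x j : derivable mu1 (stc x 0) 1 ->
  Defs.jacobian F x (o 0) j = if val j == 0%N then -(D/r) + (-(k1 * stc x 1)) * derive1 mu1 (stc x 0)
     else if val j == 1%N then - (k1 * mu1 (stc x 0)) else 0.
Proof.
move=> d0.
case: j => [[|[|[|[|[|[|[|[|//]]]]]]]] Hj] /=; rewrite /Defs.jacobian mxE.
- apply: (@DB mu1 _ (stc x 0)) => //; gfun.
- apply: DA; gfun.
all: apply: DC; gfun.
Qed.

Lemma row1 x j : derivable mu1 (stc x 0) 1 ->
  Defs.jacobian F x (o 1) j = if val j == 0%N then 0 + stc x 1 * derive1 mu1 (stc x 0)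
     else if val j == 1%N then mu1 (stc x 0) - alpha * (D / r) else 0.
Proof.
move=> d0.
case: j => [[|[|[|[|[|[|[|[|//]]]]]]]] Hj] /=; rewrite /Defs.jacobian mxE.
- apply: (@DB mu1 _ (stc x 0)) => //; gfun.
- apply: DA; gfun.
all: apply: DC; gfun.
Qed.

Lemma row2 x j : derivable mu1 (stc x 0) 1 -> derivable mu2 (stc x 2) 1 ->
  Defs.jacobian F x (o 2) j = if val j == 0%N then 0 + k2 * stc x 1 * derive1 mu1 (stc x 0)
     else if val j == 1%N then k2 * mu1 (stc x 0)
     else if val j == 2%N then -(D/r) + (-(k3 * stc x 3)) * derive1 mu2 (stc x 2)
     else if val j == 3%N then -(k3 * mu2 (stc x 2)) else 0.
Proof.
move=> d0 d2.
case: j => [[|[|[|[|[|[|[|[|//]]]]]]]] Hj] /=; rewrite /Defs.jacobian mxE.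
- apply: (@DB mu1 _ (stc x 0)) => //; gfun.
- apply: DA; gfun.
- apply: (@DB mu2 _ (stc x 2)) => //; gfun.
- apply: DA; gfun.
all: apply: DC; gfun.
Qed.

Lemma row3 x j : derivable mu2 (stc x 2) 1 ->
  Defs.jacobian F x (o 3) j = if val j == 2%N then 0 + stc x 3 * derive1 mu2 (stc x 2)
     else if val j == 3%N then mu2 (stc x 2) - alpha * (D / r) else 0.
Proof.
move=> d2.
case: j => [[|[|[|[|[|[|[|[|//]]]]]]]] Hj] /=; rewrite /Defs.jacobian mxE.
1,2: apply: DC; gfun.
- apply: (@DB mu2 _ (stc x 2)) => //; gfun.
- apply: DA; gfun.
all: apply: DC; gfun.
Qed.

Lemma col6 x i : derivable mu2 (stc x 6) 1 ->
  Defs.jacobian F x i (o 6) = if val i == 6%N then -(D/(1-r)) + (-(k3 * stc x 7)) * derive1 mu2 (stc x 6)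
     else if val i == 7%N then 0 + stc x 7 * derive1 mu2 (stc x 6) else 0.
Proof.
move=> d6.
case: i => [[|[|[|[|[|[|[|[|//]]]]]]]] Hi] /=; rewrite /Defs.jacobian mxE.
1-6: apply: DC; gfun.
all: apply: (@DB mu2 _ (stc x 6)) => //; gfun.
Qed.

Lemma col7 x i :
  Defs.jacobian F x i (o 7) = if val i == 6%N then -(k3 * mu2 (stc x 6))
     else if val i == 7%N then -(alpha * (D/(1-r))) + mu2 (stc x 6) else 0.
Proof.
case: i => [[|[|[|[|[|[|[|[|//]]]]]]]] Hi] /=; rewrite /Defs.jacobian mxE.
1-6: apply: DC; gfun.
all: apply: DA; gfun.
Qed.
End S.
Section E.
Variable R : realType.
Local Notation o k := (@Ordinal 8 k isT).

Lemma sum8 (f : 'I_8 -> R) : \sum_i f i =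
  f (o 0) + f (o 1) + f (o 2) + f (o 3) + f (o 4) + f (o 5) + f (o 6) + f (o 7).
Proof.
rewrite !big_ord_recl big_ord0 addr0 !addrA.
by repeat congr (_ + _); congr f; apply: val_inj.
Qed.

Lemma eig_left (J : 'M[R]_8) lam (v : 'rV_8) : 0 < lam -> v != 0 -> v *m J = lam *: v ->
  exists z : R[i], eigenvalue (map_mx (fun a : R => (a%:C)%C) J) z /\ 0 < complex.Re z.
Proof.
move=> lp vn e; exists (lam%:C)%C; split => //.
rewrite (eigenvalue_map (real_complex R)).
by apply/eigenvalueP; exists v.
Qed.

Lemma eig_right (J : 'M[R]_8) lam (w : 'cV_8) : 0 < lam -> w != 0 -> J *m w = lam *: w ->
  exists z : R[i], eigenvalue (map_mx (fun a : R => (a%:C)%C) J) z /\ 0 < complex.Re z.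
Proof.
move=> lp wn e.
have : \det (lam%:M - J) == 0.
  rewrite -det_tr; apply/det0P; exists w^T; first by rewrite trmx_eq0.
  by rewrite -trmx_mul mulmxBl e mul_scalar_mx subrr trmx0.
case/det0P => v vn.
rewrite mulmxBr mul_mx_scalar => /eqP; rewrite subr_eq0 => /eqP ev.
exact: (eig_left _ _ _ lp vn (esym ev)).
Qed.

Variables (mu1 mu2 : R -> R) (D r alpha k1 k2 k3 S1in S2in : R).
Local Notation F := (chemo_field mu1 mu2 D r alpha k1 k2 k3 S1in S2in).

Lemma colE8 (s : seq R) i k : (\col_(j < 8) s`_j) i k = s`_i.
Proof. by rewrite mxE. Qed.

Lemma colZ8 (a : R) (s : seq R) i k : (a *: \col_(j < 8) s`_j) i k = a * s`_i.
Proof. by rewrite !mxE. Qed.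

Lemma quad_root (a bc : R) : 0 < bc -> exists2 lam, 0 < lam & lam * lam = a * lam + bc.
Proof.
move=> hbc.
pose S := Num.sqrt (a ^+ 2 + 4 * bc).
have S0 : 0 <= S := sqrtr_ge0 _.
have SS : S ^+ 2 = a ^+ 2 + 4 * bc by rewrite sqr_sqrtr //; nra.
exists ((a + S) / 2).
  apply: divr_gt0 => //; nra.
have : (a + S) / 2 * ((a + S) / 2) - (a * ((a + S) / 2) + bc) = (S ^+ 2 - (a ^+ 2 + 4 * bc)) / 4.
  by field.
by rewrite SS subrr mul0r => /eqP; rewrite subr_eq0 => /eqP.
Qed.

Lemma unstable_r2 x l : 0 < D -> 0 < r < 1 -> 0 < alpha -> 0 < k3 ->
  derivable mu2 l 1 -> derive1 mu2 l < 0 -> mu2 l = alpha * (D/(1-r)) ->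
  stc x 6 = l -> 0 < stc x 7 -> unstable F x.
Proof.
move=> hD /andP[r0 r1] ha hk3 dl neg ml e6 X7.
have D2p : 0 < D/(1-r) by apply: divr_gt0; lra.
pose a := -(D/(1-r)) + (-(k3 * stc x 7)) * derive1 mu2 l.
pose b := -(k3 * mu2 l).
pose c := 0 + stc x 7 * derive1 mu2 l.
have bc : 0 < b * c.
  have : 0 < k3 * (alpha * (D/(1-r))) * stc x 7 * (- derive1 mu2 l).
    have nd : 0 < - derive1 mu2 l by rewrite oppr_gt0.
    by apply: mulr_gt0 => //; apply: mulr_gt0 => //; apply: mulr_gt0 => //; apply: mulr_gt0.
  by rewrite /b /c ml; congr (0 < _); ring.
have [lam lp lsq] := @quad_root a (b * c) bc.
have dl6 : derivable mu2 (stc x 6) 1 by rewrite e6.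
set J := Defs.jacobian F x.
apply: (eig_right _ lam (\col_i [:: 0;0;0;0;0;0;lam;c]`_i) lp).
- by apply/eqP => /matrixP /(_ (o 6) ord0); rewrite !mxE /= => h; lra.
apply/matrixP => i k; rewrite mxE sum8 !colE8 colZ8 /= ?mulr0 ?add0r /J.
rewrite col6 // col7 e6.
case: i => [[|[|[|[|[|[|[|[|//]]]]]]]] Hi] /=; rewrite ?mul0r ?mulr0 ?addr0 //.
all: by rewrite ?lsq /a /b /c ?ml; ring.
Qed.
End E.
Section E5.
Variable R : realType.
Local Notation o k := (@Ordinal 8 k isT).
Variables (mu1 mu2 : R -> R) (D r alpha k1 k2 k3 S1in S2in : R).
Local Notation F := (chemo_field mu1 mu2 D r alpha k1 k2 k3 S1in S2in).

Lemma rowE8 (s : seq R) i : (\row_(j < 8) s`_j) ord0 i = s`_i.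
Proof. by rewrite mxE. Qed.

Lemma rowZ8 (a : R) (s : seq R) i : (a *: \row_(j < 8) s`_j) ord0 i = a * s`_i.
Proof. by rewrite !mxE. Qed.

Lemma unstable_wash x l : 0 < D -> 0 < r -> 0 < alpha -> 0 < k3 ->
  derivable mu1 S1in 1 -> stc x 0 = S1in -> stc x 1 = 0 ->
  derivable mu2 l 1 -> derive1 mu2 l < 0 -> mu2 l = alpha * (D/r) ->
  stc x 2 = l -> 0 < stc x 3 -> unstable F x.
Proof.
move=> hD r0 ha hk3 d1 e0 e1 dl neg ml e2 X3.
have D1p : 0 < D/r by apply: divr_gt0.
have d0 : derivable mu1 (stc x 0) 1 by rewrite e0.
have d2 : derivable mu2 (stc x 2) 1 by rewrite e2.
pose a := -(D/r) + (-(k3 * stc x 3)) * derive1 mu2 l.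
pose b := -(k3 * mu2 l).
pose c := 0 + stc x 3 * derive1 mu2 l.
have bc : 0 < b * c.
  have : 0 < k3 * (alpha * (D/r)) * stc x 3 * (- derive1 mu2 l).
    have nd : 0 < - derive1 mu2 l by rewrite oppr_gt0.
    by apply: mulr_gt0 => //; apply: mulr_gt0 => //; apply: mulr_gt0 => //; apply: mulr_gt0.
  by rewrite /b /c ml; congr (0 < _); ring.
have [lam lp lsq] := @quad_root R a (b * c) bc.
set J := Defs.jacobian F x.
pose e := mu1 S1in - alpha * (D/r).
case: (ltrP 0 e) => he.
  apply: (eig_left _ _ e (\row_j [:: 0;1;0;0;0;0;0;0]`_j) he).
  - by apply/eqP => /matrixP /(_ ord0 (o 1)); rewrite !mxE /= => h; lra.
  apply/rowP => j; rewrite mxE sum8 !rowE8 rowZ8 /= !mul0r !add0r !addr0 mul1r /J.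
  rewrite row1 // e0 e1.
  case: j => [[|[|[|[|[|[|[|[|//]]]]]]]] Hj] /=; by rewrite /e; ring.
pose u1 := lam * (k2 * mu1 S1in) / (lam - e).
have le : lam - e != 0 by apply/eqP => h; lra.
apply: (eig_left _ _ lam (\row_j [:: 0;u1;lam;b;0;0;0;0]`_j) lp).
- by apply/eqP => /matrixP /(_ ord0 (o 2)); rewrite !mxE /= => h; lra.
apply/rowP => j; rewrite mxE sum8 !rowE8 rowZ8 /= !mul0r !add0r !addr0 /J.
rewrite row1 // row2 // row3 // e0 e1 e2.
case: j => [[|[|[|[|[|[|[|[|//]]]]]]]] Hj] /=; rewrite ?mulr0 ?addr0 ?add0r //.
- by ring.
- have hpos : 0 < lam * r - (mu1 S1in * r - alpha * D).
    have -> : lam * r - (mu1 S1in * r - alpha * D) = (lam - e) * r.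
      by rewrite /e; field; rewrite gt_eqF.
    by apply: mulr_gt0 => //; lra.
  rewrite /u1 /e; field.
  by rewrite !gt_eqF.
- by rewrite lsq /a /b /c; ring.
- by rewrite /b ml; ring.
Qed.
End E5.
Section E6.
Variable R : realType.
Local Notation o k := (@Ordinal 8 k isT).
Variables (mu1 mu2 : R -> R) (D r alpha k1 k2 k3 S1in S2in : R).
Local Notation F := (chemo_field mu1 mu2 D r alpha k1 k2 k3 S1in S2in).

Lemma unstable_both x l1 l : 0 < D -> 0 < r -> 0 < alpha -> 0 < k1 -> 0 < k2 -> 0 < k3 ->
  derivable mu1 l1 1 -> 0 < derive1 mu1 l1 -> mu1 l1 = alpha * (D/r) ->
  stc x 0 = l1 -> 0 < stc x 1 ->
  derivable mu2 l 1 -> derive1 mu2 l < 0 -> mu2 l = alpha * (D/r) ->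
  stc x 2 = l -> 0 < stc x 3 -> unstable F x.
Proof.
move=> hD r0 ha hk1 hk2 hk3 dm1 pos ml1 e0 X1 dl neg ml e2 X3.
have D1p : 0 < D/r by apply: divr_gt0.
have d0 : derivable mu1 (stc x 0) 1 by rewrite e0.
have d2 : derivable mu2 (stc x 2) 1 by rewrite e2.
pose a := -(D/r) + (-(k3 * stc x 3)) * derive1 mu2 l.
pose b := -(k3 * mu2 l).
pose c := 0 + stc x 3 * derive1 mu2 l.
have bc : 0 < b * c.
  have : 0 < k3 * (alpha * (D/r)) * stc x 3 * (- derive1 mu2 l).
    have nd : 0 < - derive1 mu2 l by rewrite oppr_gt0.
    by apply: mulr_gt0 => //; apply: mulr_gt0 => //; apply: mulr_gt0 => //; apply: mulr_gt0.
  by rewrite /b /c ml; congr (0 < _); ring.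
have [lam lp lsq] := @quad_root R a (b * c) bc.
set J := Defs.jacobian F x.
pose d1 := derive1 mu1 l1.
pose X := stc x 1.
pose det := lam * (lam + D/r + k1 * X * d1) + k1 * (alpha * (D/r)) * X * d1.
have detp : 0 < det.
  rewrite /det; apply: addr_gt0; apply: mulr_gt0 => //.
  - by apply: addr_gt0 => //; [apply: addr_gt0 | apply: mulr_gt0 => //; apply: mulr_gt0].
  - by apply: mulr_gt0 => //; apply: mulr_gt0 => //; apply: mulr_gt0.
pose u0 := X * d1 * lam * k2 * (alpha * (D/r) + lam) / det.
pose u1 := (u0 * (-(k1 * (alpha * (D/r)))) + lam * k2 * (alpha * (D/r))) / lam.
apply: (eig_left _ _ lam (\row_j [:: u0;u1;lam;b;0;0;0;0]`_j) lp).
- by apply/eqP => /matrixP /(_ ord0 (o 2)); rewrite !mxE /= => h; lra.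
apply/rowP => j; rewrite mxE sum8 !rowE8 rowZ8 /= ?mul0r ?add0r ?addr0 /J.
rewrite row0 // row1 // row2 // row3 // e0 e2 ml1.
case: j => [[|[|[|[|[|[|[|[|//]]]]]]]] Hj] /=; rewrite ?mulr0 ?addr0 ?add0r //.
- rewrite /u1 /u0 /det -/X -/d1. 
  field.
  have hX : 0 < X by [].
  have hd1 : 0 < d1 by [].
  rewrite !gt_eqF // addr_gt0 // !mulr_gt0 // ?addr_gt0 // ?mulr_gt0 //.
- by rewrite /u1 [RHS]mulrC divfK ?gt_eqF // subrr mulr0 addr0; congr (_ + _); rewrite mulrA.
- by rewrite lsq /a /b /c; ring.
- by rewrite /b ml; ring.
Qed.
End E6.
Section E7.
Variable R : realType.
Lemma lam2_neg (mu2 : R -> R) a l : (forall x : R, 0 < x -> derivable mu2 x 1) ->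
  (exists2 Sm : R, 0 < Sm &
     (forall x, 0 < x < Sm -> 0 < derive1 mu2 x) /\
     (forall x, Sm < x -> derive1 mu2 x < 0)) ->
  is_lam2_2 mu2 a l -> derive1 mu2 l < 0.
Proof.
move=> der [Sm Sm0 [inc dec]] [l0 [ml [s' [/andP[s0 sl] ms]]]].
apply: dec; rewrite ltNge; apply/negP => lSm.
have P1 : forall y, y \in `]s', l[%R -> is_derive y 1 mu2 (derive1 mu2 y).
  move=> y; rewrite in_itv /= => /andP[ys yl].
  rewrite derive1E; apply: derivableP; apply: der; exact: lt_trans ys.
have P2 : {within `[s', l], continuous mu2}.
  apply: derivable_within_continuous => y; rewrite in_itv /= => /andP[ys yl].
  apply: der; exact: lt_le_trans ys.
have [c cin eq] := @MVT R mu2 (derive1 mu2) s' l sl P1 P2.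
move: cin; rewrite in_itv /= => /andP[cs cl].
have : 0 < derive1 mu2 c by apply: inc; rewrite (lt_trans s0 cs) /= (lt_le_trans cl lSm).
move: eq; rewrite ml ms subrr => eq hc.
have : 0 < derive1 mu2 c * (l - s') by apply: mulr_gt0 => //; rewrite subr_gt0.
by rewrite -eq ltxx.
Qed.
End E7.
Theorem proposition4 (R : realType) (mu1 mu2 : R -> R)
  (D r alpha k1 k2 k3 S1in S2in m1 : R)
  (hD : 0 < D) (hr : 0 < r < 1) (halpha : 0 < alpha < 1)
  (hk1 : 0 < k1) (hk2 : 0 < k2) (hk3 : 0 < k3)
  (hS1in : 0 < S1in) (hS2in : 0 < S2in)
  (* mu1, mu2 of class C^1 on R_+ *)
  (mu1_cont0 : mu1 x @[x --> (0:R)^'+] --> mu1 0)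
  (mu1_der : forall x : R, 0 < x -> derivable mu1 x 1)
  (mu1_der_cont : forall x : R, 0 < x -> {for x, continuous (derive1 mu1)})
  (mu2_cont0 : mu2 x @[x --> (0:R)^'+] --> mu2 0)
  (mu2_der : forall x : R, 0 < x -> derivable mu2 x 1)
  (mu2_der_cont : forall x : R, 0 < x -> {for x, continuous (derive1 mu2)})
  (* H1 *)
  (H1_0 : mu1 0 = 0) (H1_inf : mu1 x @[x --> +oo%R] --> m1)
  (H1_incr : forall x : R, 0 < x -> 0 < derive1 mu1 x)
  (* H2 *)
  (H2_0 : mu2 0 = 0) (H2_inf : mu2 x @[x --> +oo%R] --> 0)
  (H2_shape : exists2 Sm : R, 0 < Sm &
     (forall x, 0 < x < Sm -> 0 < derive1 mu2 x) /\
     (forall x, Sm < x -> derive1 mu2 x < 0)) :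
  let D1 := D / r in let D2 := D / (1 - r) in
  let F := chemo_field mu1 mu2 D r alpha k1 k2 k3 S1in S2in in
  (* E_00^02 *)
  (forall x l22, steady F x -> is_lam2_2 mu2 (alpha * D2) l22 ->
     stc x 0 = S1in -> stc x 1 = 0 -> stc x 2 = S2in -> stc x 3 = 0 ->
     stc x 4 = S1in -> stc x 5 = 0 -> stc x 6 = l22 ->
     stc x 7 = (S2in - l22) / (alpha * k3) -> 0 < stc x 7 ->
     unstable F x) /\
  (* E_00^12 *)
  (forall x l1 l22, steady F x -> is_lam1 mu1 (alpha * D2) l1 ->
     is_lam2_2 mu2 (alpha * D2) l22 ->
     stc x 0 = S1in -> stc x 1 = 0 -> stc x 2 = S2in -> stc x 3 = 0 ->
     stc x 4 = l1 -> stc x 5 = (S1in - l1) / (alpha * k1) -> 0 < stc x 5 ->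
     stc x 6 = l22 -> 0 < stc x 7 ->
     unstable F x) /\
  (* E_10^12 *)
  (forall x l1 l22, steady F x -> is_lam1 mu1 (alpha * D1) l1 ->
     is_lam2_2 mu2 (alpha * D2) l22 ->
     stc x 0 = l1 -> stc x 1 = (S1in - l1) / (alpha * k1) -> 0 < stc x 1 ->
     stc x 2 = S2in + k2 / k1 * (S1in - l1) -> stc x 3 = 0 ->
     0 < stc x 5 -> stc x 6 = l22 -> 0 < stc x 7 ->
     unstable F x) /\
  (* E_02^01 *)
  (forall x l12, steady F x -> is_lam2_2 mu2 (alpha * D1) l12 ->
     stc x 0 = S1in -> stc x 1 = 0 -> stc x 2 = l12 ->
     stc x 3 = (S2in - l12) / (alpha * k3) -> 0 < stc x 3 ->
     stc x 5 = 0 -> 0 < stc x 7 ->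
     unstable F x) /\
  (* E_02^11 *)
  (forall x l12, steady F x -> is_lam2_2 mu2 (alpha * D1) l12 ->
     stc x 0 = S1in -> stc x 1 = 0 -> stc x 2 = l12 ->
     stc x 3 = (S2in - l12) / (alpha * k3) -> 0 < stc x 3 ->
     0 < stc x 5 -> 0 < stc x 7 ->
     unstable F x) /\
  (* E_12^11 *)
  (forall x l1 l12, steady F x -> is_lam1 mu1 (alpha * D1) l1 ->
     is_lam2_2 mu2 (alpha * D1) l12 ->
     stc x 0 = l1 -> stc x 1 = (S1in - l1) / (alpha * k1) -> 0 < stc x 1 ->
     stc x 2 = l12 -> 0 < stc x 3 ->
     0 < stc x 5 -> 0 < stc x 7 ->
     unstable F x).
Proof.
move=> D1 D2 F.
case/andP: (hr) => r0 r1; case/andP: (halpha) => a0 a1.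
have hl2 : forall a l, is_lam2_2 mu2 a l -> derive1 mu2 l < 0.
  by move=> a l; apply: lam2_neg.
split; [|split; [|split; [|split; [|split]]]].
- move=> x l st hl e0 e1 e2 e3 e4 e5 e6 e7 p7.
  have [l0 [ml _]] := hl.
  exact: (@unstable_r2 R mu1 mu2 D r alpha k1 k2 k3 S1in S2in x l hD hr a0 hk3 (mu2_der l l0) (hl2 _ _ hl) ml e6 p7).
- move=> x l1 l st hl1 hl e0 e1 e2 e3 e4 e5 p5 e6 p7.
  have [l0 [ml _]] := hl.
  exact: (@unstable_r2 R mu1 mu2 D r alpha k1 k2 k3 S1in S2in x l hD hr a0 hk3 (mu2_der l l0) (hl2 _ _ hl) ml e6 p7).
- move=> x l1 l st hl1 hl e0 e1 p1 e2 e3 p5 e6 p7.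
  have [l0 [ml _]] := hl.
  exact: (@unstable_r2 R mu1 mu2 D r alpha k1 k2 k3 S1in S2in x l hD hr a0 hk3 (mu2_der l l0) (hl2 _ _ hl) ml e6 p7).
- move=> x l st hl e0 e1 e2 e3 p3 e5 p7.
  have [l0 [ml _]] := hl.
  exact: (@unstable_wash R mu1 mu2 D r alpha k1 k2 k3 S1in S2in x l hD r0 a0 hk3 (mu1_der S1in hS1in) e0 e1 (mu2_der l l0) (hl2 _ _ hl) ml e2 p3).
- move=> x l st hl e0 e1 e2 e3 p3 p5 p7.
  have [l0 [ml _]] := hl.
  exact: (@unstable_wash R mu1 mu2 D r alpha k1 k2 k3 S1in S2in x l hD r0 a0 hk3 (mu1_der S1in hS1in) e0 e1 (mu2_der l l0) (hl2 _ _ hl) ml e2 p3).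
- move=> x l1 l st hl1 hl e0 e1 p1 e2 p3 p5 p7.
  have [l0 [ml _]] := hl.
  have [l10 ml1] := hl1.
  exact: (@unstable_both R mu1 mu2 D r alpha k1 k2 k3 S1in S2in x l1 l hD r0 a0 hk1 hk2 hk3 (mu1_der l1 l10) (H1_incr l1 l10) ml1 e0 p1 (mu2_der l l0) (hl2 _ _ hl) ml e2 p3).
Qed.
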